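(* Let $\bm{U}_{RU},\bm{U}_{LU},\bm{U}_{LD},\bm{U}_{RD}\in\mathcal{G}$ and define the wave speeds $S_L=2\min_{\bm{W}}\lambda_1^{(1)}(\bm{W})$, $S_R=2\max_{\bm{W}}\lambda_1^{(4)}(\bm{W})$, $S_D=2\min_{\bm{W}}\lambda_2^{(1)}(\bm{W})$, $S_U=2\max_{\bm{W}}\lambda_2^{(4)}(\bm{W})$, where $\bm{W}$ ranges over $\{\bm{U}_{LD},\bm{U}_{RD},\bm{U}_{LU},\bm{U}_{RU}\}$. Assume $S_L<0<S_R$ and $S_D<0<S_U$. Let $$\bm{U}^{\ast}=\frac{S_RS_U\bm{U}_{RU}+S_LS_D\bm{U}_{LD}-S_RS_D\bm{U}_{RD}-S_LS_U\bm{U}_{LU}}{(S_R-S_L)(S_U-S_D)}-\frac{S_U(\bm{F}_{RU}-\bm{F}_{LU})-S_D(\bm{F}_{RD}-\bm{F}_{LD})}{(S_R-S_L)(S_U-S_D)}-\frac{S_R(\bm{G}_{RU}-\bm{G}_{RD})-S_L(\bm{G}_{LU}-\bm{G}_{LD})}{(S_R-S_L)(S_U-S_D)},$$ where $\bm{F}_{K}=\bm{F}_1(\bm{U}_K)$ and $\bm{G}_K=\bm{F}_2(\bm{U}_K)$ for $K\in\{LD,RD,LU,RU\}$. Then $\bm{U}^\ast=(D^\ast,\bm{m}^\ast,E^\ast)^T\in\mathcal{G}$, i.e. $D^\ast>0$, $E^\ast>0$ and $(E^\ast)^2-(D^\ast)^2-|\bm{m}^\ast|^2>0$.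
   Context: Two-dimensional special relativistic hydrodynamics in units with $c=1$. Primitive variables: rest-mass density $\rho$, velocity $\bm{u}=(u_1,u_2)$, pressure $p$; equation of state $p=(\Gamma-1)\rho e$ with fixed $\Gamma\in(1,2]$; $h=1+e+p/\rho$; $\gamma=(1-|\bm{u}|^2)^{-1/2}$. Conservative variables $\bm{U}=(D,\bm{m},E)^T$ with $D=\rho\gamma$, $\bm{m}=\rho h\gamma^2\bm{u}$, $E=\rho h\gamma^2-p$. Fluxes $\bm{F}_\ell(\bm{U})=(Du_\ell,\ \bm{m}u_\ell+p\bm{e}_\ell,\ (E+p)u_\ell)^T$, $\ell=1,2$ ($\bm{e}_\ell$ the $\ell$-th unit vector of $\mathbb{R}^2$). Admissible set $\mathcal{G}=\{\bm{U}: D>0,\ E-\sqrt{D^2+|\bm{m}|^2}>0\}$ (equivalently $\rho>0,p>0,|\bm{u}|<1$; on $\mathcal{G}$ primitive variables and fluxes are well defined). With $c_s=\sqrt{\Gamma p/(\rho h)}$, $\lambda_\ell^{(1)}(\bm{U})$ and $\lambda_\ell^{(4)}(\bm{U})$ denote $\dfrac{u_\ell(1-c_s^2)\mp c_s\gamma^{-1}\sqrt{1-u_\ell^2-c_s^2(|\bm{u}|^2-u_\ell^2)}}{1-c_s^2|\bm{u}|^2}$ (minus sign for $(1)$, plus sign for $(4)$), the smallest and largest eigenvalues of $\partial\bm{F}_\ell/\partial\bm{U}$. The four states are the initial data of a 2D Riemann problem in the four quadrants (RU: first, LU: second, LD: third, RD: fourth), and $\bm{U}^\ast$ is the intermediate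 state of the multidimensional HLL Riemann solver. *)

(* Defs.v *)
From Stdlib Require Import Reals Lra.
Open Scope R_scope.

Record prim := mkPrim { rho : R; u1 : R; u2 : R; pr : R }.

Definition prim_adm (W : prim) : Prop :=
  0 < rho W /\ 0 < pr W /\ u1 W ^ 2 + u2 W ^ 2 < 1.

Definition usq (W : prim) : R := u1 W ^ 2 + u2 W ^ 2.
Definition lorentz (W : prim) : R := / sqrt (1 - usq W).
(* specific internal energy from EOS p = (Gamma-1) rho e *)
Definition eint (Gam : R) (W : prim) : R := pr W / ((Gam - 1) * rho W).
Definition enth (Gam : R) (W : prim) : R := 1 + eint Gam W + pr W / rho W.

(* velocity component l (l = 1 or 2; any other index is treated as 2) *)
Definition uc (l : nat) (W : prim) : R := if Nat.eqb l 1 then u1 W else u2 W.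

(* Conservative variables U = (D, m1, m2, E), components indexed 0..3 *)
Definition cons (Gam : R) (W : prim) (k : nat) : R :=
  let g := lorentz W in
  let rh := rho W * enth Gam W * g ^ 2 in
  match k with
  | 0%nat => rho W * g
  | 1%nat => rh * u1 W
  | 2%nat => rh * u2 W
  | _ => rh - pr W
  end.

Definition flux (Gam : R) (l : nat) (W : prim) (k : nat) : R :=
  match k with
  | 0%nat => cons Gam W 0 * uc l W
  | 1%nat => cons Gam W 1 * uc l W + (if Nat.eqb l 1 then pr W else 0)
  | 2%nat => cons Gam W 2 * uc l W + (if Nat.eqb l 2 then pr W else 0)
  | _ => (cons Gam W 3 + pr W) * uc l W
  end.

Definition csnd (Gam : R) (W : prim) : R :=
  sqrt (Gam * pr W / (rho W * enth Gam W)).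

(* extreme eigenvalues lambda_l^(1) (sgn = -1) and lambda_l^(4) (sgn = +1) *)
Definition lam_gen (sgn : R) (Gam : R) (l : nat) (W : prim) : R :=
  let c := csnd Gam W in
  let ul := uc l W in
  (ul * (1 - c ^ 2)
   + sgn * c * / lorentz W * sqrt (1 - ul ^ 2 - c ^ 2 * (usq W - ul ^ 2)))
  / (1 - c ^ 2 * usq W).
Definition lam1 (Gam : R) (l : nat) (W : prim) : R := lam_gen (-1) Gam l W.
Definition lam4 (Gam : R) (l : nat) (W : prim) : R := lam_gen 1 Gam l W.

Definition min4 (a b c d : R) : R := Rmin (Rmin a b) (Rmin c d).
Definition max4 (a b c d : R) : R := Rmax (Rmax a b) (Rmax c d).

Definition S_L Gam (WRU WLU WLD WRD : prim) : R :=
  2 * min4 (lam1 Gam 1 WLD) (lam1 Gam 1 WRD) (lam1 Gam 1 WLU) (lam1 Gam 1 WRU).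
Definition S_R Gam (WRU WLU WLD WRD : prim) : R :=
  2 * max4 (lam4 Gam 1 WLD) (lam4 Gam 1 WRD) (lam4 Gam 1 WLU) (lam4 Gam 1 WRU).
Definition S_D Gam (WRU WLU WLD WRD : prim) : R :=
  2 * min4 (lam1 Gam 2 WLD) (lam1 Gam 2 WRD) (lam1 Gam 2 WLU) (lam1 Gam 2 WRU).
Definition S_U Gam (WRU WLU WLD WRD : prim) : R :=
  2 * max4 (lam4 Gam 2 WLD) (lam4 Gam 2 WRD) (lam4 Gam 2 WLU) (lam4 Gam 2 WRU).

Definition Ustar Gam (WRU WLU WLD WRD : prim) (k : nat) : R :=
  let sL := S_L Gam WRU WLU WLD WRD in
  let sR := S_R Gam WRU WLU WLD WRD in
  let sD := S_D Gam WRU WLU WLD WRD in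
  let sU := S_U Gam WRU WLU WLD WRD in
  let den := (sR - sL) * (sU - sD) in
  let U := fun W => cons Gam W k in
  let F := fun W => flux Gam 1 W k in
  let G := fun W => flux Gam 2 W k in
  (sR * sU * U WRU + sL * sD * U WLD - sR * sD * U WRD - sL * sU * U WLU) / den
  - (sU * (F WRU - F WLU) - sD * (F WRD - F WLD)) / den
  - (sR * (G WRU - G WRD) - sL * (G WLU - G WLD)) / den.

(* Main.v *)
Require Import Defs.
From Stdlib Require Import Reals Lra Psatz.
Open Scope R_scope.

Definition inG (a b c d : R) : Prop := 0 < a /\ 0 < d /\ d^2 - a^2 - (b^2 + c^2) > 0.

Lemma inG_add a1 b1 c1 d1 a2 b2 c2 d2 :
  inG a1 b1 c1 d1 -> inG a2 b2 c2 d2 -> inG (a1+a2) (b1+b2) (c1+c2) (d1+d2).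
Proof.
  unfold inG; intros [Ha1 [Hd1 H1]] [Ha2 [Hd2 H2]].
  assert (CS : (a1*a2+b1*b2+c1*c2)^2 <= (a1^2+b1^2+c1^2)*(a2^2+b2^2+c2^2)).
  { assert (0 <= (a1*b2-a2*b1)^2 + (a1*c2-a2*c1)^2 + (b1*c2-b2*c1)^2) by
      (apply Rplus_le_le_0_compat; [apply Rplus_le_le_0_compat|]; apply pow2_ge_0).
    assert (E : (a1^2+b1^2+c1^2)*(a2^2+b2^2+c2^2) - (a1*a2+b1*b2+c1*c2)^2 =
      (a1*b2-a2*b1)^2 + (a1*c2-a2*c1)^2 + (b1*c2-b2*c1)^2) by ring. lra. }
  assert (P : (a1^2+b1^2+c1^2)*(a2^2+b2^2+c2^2) < (d1*d2)^2).
  { assert (0 <= a1^2+b1^2+c1^2) by nra. 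
    assert (0 <= a2^2+b2^2+c2^2) by nra.
    replace ((d1*d2)^2) with (d1^2*d2^2) by ring.
    apply Rle_lt_trans with ((a1^2+b1^2+c1^2)*d2^2).
    - apply Rmult_le_compat_l; nra.
    - apply Rmult_lt_compat_r; nra. }
  assert (a1*a2+b1*b2+c1*c2 < d1*d2).
  { destruct (Rle_or_lt (a1*a2+b1*b2+c1*c2) 0). nra.
    assert (0 < d1*d2) by nra. nra. }
  split; [lra|split; [lra|nra]].
Qed.

Lemma inG_scale k a b c d : 0 < k -> inG a b c d -> inG (k*a) (k*b) (k*c) (k*d).
Proof.
  unfold inG; intros Hk [Ha [Hd H]]. split; [nra|split; [nra|]].
  replace ((k*d)^2 - (k*a)^2 - ((k*b)^2 + (k*c)^2)) with (k^2*(d^2 - a^2 - (b^2+c^2))) by ring.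
  assert (0 < k^2) by nra. nra.
Qed.
Lemma core_abs (G r p ul ut s : R) :
  1 < G <= 2 -> 0 < r -> 0 < p -> ul^2+ut^2 < 1 ->
  let b := ul^2+ut^2 in let g := / sqrt (1-b) in
  let h := 1 + p/((G-1)*r) + p/r in
  let c := sqrt (G*p/(r*h)) in
  (ul*(1-c^2) + 1*c*/g*sqrt(1-ul^2-c^2*(b-ul^2)))/(1-c^2*b) <= s ->
  let H := r*h*g^2 in
  0 < s*(r*g) - r*g*ul /\ 0 < s*(H-p) - (H-p+p)*ul /\
  (s*(H-p) - (H-p+p)*ul)^2 - (s*(r*g) - r*g*ul)^2
   - ((s*(H*ul) - (H*ul*ul+p))^2 + (s*(H*ut) - H*ut*ul)^2) > 0.
Proof.
  intros HG Hr Hp Hb b g h c HL H.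
  set (e := p/((G-1)*r)) in *.
  assert (He : 0 < e) by (unfold e; apply Rdiv_lt_0_compat; nra).
  assert (Hpe : p = (G-1)*r*e) by (unfold e; field; lra).
  assert (Hh : h = 1 + G*e) by (unfold h; rewrite Hpe; unfold e; field; lra).
  set (sq := sqrt (1-b)) in *.
  assert (Hsq : 0 < sq) by (apply sqrt_lt_R0; unfold b; lra).
  assert (Hsq2 : sq^2 = 1-b) by (apply pow2_sqrt; unfold b; lra).
  assert (Hg : g = /sq) by reflexivity.
  assert (Hig : /g = sq) by (rewrite Hg; apply Rinv_inv).
  rewrite Hig in HL.
  assert (Hc2 : c^2 = G*(G-1)*e/(1+G*e)).
  { unfold c. rewrite pow2_sqrt.
    - rewrite Hh, Hpe. field. nra.
    - rewrite Hh. apply Rlt_le, Rdiv_lt_0_compat; nra. }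
  assert (Hc : 0 < c).
  { unfold c. apply sqrt_lt_R0. rewrite Hh. apply Rdiv_lt_0_compat; nra. }
  assert (Hc21 : c^2 < 1).
  { rewrite Hc2. apply (Rmult_lt_reg_r (1+G*e)). nra.
    unfold Rdiv. rewrite Rmult_assoc, Rinv_l by nra. assert (0 <= G*e*(2-G)) by (apply Rmult_le_pos; nra). nra. }
  clearbody c.
  set (arg := 1-ul^2-c^2*(b-ul^2)) in *.
  assert (Harg : 0 < arg) by (unfold arg, b; nra).
  set (R0 := sqrt arg) in *.
  assert (HR0 : 0 < R0) by (apply sqrt_lt_R0; lra).
  assert (HR02 : R0^2 = arg) by (apply pow2_sqrt; lra).
  clearbody R0.
  assert (Hbsq : b = 1 - sq^2) by lra.
  set (L := (ul * (1 - c ^ 2) + 1 * c * sq * R0) / (1 - c ^ 2 * b)) in *.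
  set (d := 1 - c^2*b) in *.
  assert (Hd : 0 < d) by (unfold d, b; nra).
  assert (HLd : L*d = ul*(1-c^2) + c*sq*R0) by (unfold L; field; lra).
  assert (HR0u : ul*c*sq < R0).
  { destruct (Rle_or_lt (ul*c*sq) 0). lra.
    assert (R0^2 - (ul*c*sq)^2 > 0).
    { rewrite HR02. unfold arg. rewrite Hbsq.
      replace (1 - ul ^ 2 - c ^ 2 * (1 - sq ^ 2 - ul ^ 2) - (ul * c * sq) ^ 2)
        with ((1-ul^2)*(1-c^2+c^2*sq^2)) by ring.
      assert (ul^2 < 1) by (unfold b in Hbsq; nra).
      apply Rmult_lt_0_compat; nra. }
    nra. }
  assert (HLu : (L-ul)*d = c*sq*(R0 - ul*c*sq)).
  { replace ((L-ul)*d) with (L*d - ul*d) by ring. rewrite HLd. unfold d. rewrite Hbsq. ring. }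
  assert (Ht : 0 < L - ul).
  { assert (0 < (L-ul)*d) by (rewrite HLu; apply Rmult_lt_0_compat; nra).
    nra. }
  assert (HP : (1-c^2)*(L-ul)^2 = c^2*(1-L^2)*sq^2).
  { assert (X : d^2*((1-c^2)*(L-ul)^2 - c^2*(1-L^2)*sq^2) = 0).
    { replace (d^2*((1-c^2)*(L-ul)^2 - c^2*(1-L^2)*sq^2)) with
        ((1-c^2)*((L-ul)*d)^2 - c^2*sq^2*(d^2 - (L*d)^2)) by ring.
      rewrite HLu, HLd.
      replace ((1 - c ^ 2) * (c * sq * (R0 - ul * c * sq)) ^ 2 -
         c ^ 2 * sq ^ 2 * (d ^ 2 - (ul * (1 - c ^ 2) + c * sq * R0) ^ 2))
      with (c^2*sq^2*d*(R0^2 - arg)) by (unfold d, arg; rewrite Hbsq; ring).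
      rewrite HR02. ring. }
    assert (0 < d^2) by nra.
    apply Rmult_integral in X. destruct X as [X|X]; nra. }
  assert (H1L : 0 < 1 - L^2).
  { assert (0 < (1-c^2)*(L-ul)^2) by (apply Rmult_lt_0_compat; nra).
    assert (0 < c^2*sq^2) by (apply Rmult_lt_0_compat; nra).
    nra. }
  assert (Hul2 : ul^2 < 1) by (unfold b in Hbsq; nra).
  assert (Hut2 : ut^2 = 1 - sq^2 - ul^2) by (unfold b in Hbsq; lra).
  set (A := r*(r*h^2 - r - 2*h*p)).
  assert (HA : A = r^2*e*(2+e*G*(2-G))) by (unfold A; rewrite Hh, Hpe; ring).
  assert (HA0 : 0 < A).
  { rewrite HA. assert (0 <= e*G*(2-G)) by (apply Rmult_le_pos; nra).
    apply Rmult_lt_0_compat; nra. }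
  assert (HK : A*c^2 - p^2*(1-c^2) > 0).
  { replace (A*c^2 - p^2*(1-c^2)) with (r^2*e^2*(G-1)*(G+1+e*G*(2-G))/(1+G*e))
      by (rewrite HA, Hc2, Hpe; field; nra).
    assert (0 <= e*G*(2-G)) by (apply Rmult_le_pos; nra).
    apply Rdiv_lt_0_compat; [|nra].
    assert (0 < r^2) by nra. assert (0 < e^2) by nra.
    apply Rmult_lt_0_compat; [apply Rmult_lt_0_compat; [apply Rmult_lt_0_compat|]|]; lra. }
  set (Qt := fun x => A*(x-ul)^2 - p^2*sq^2*(1-x^2)).
  assert (HQL : 0 < Qt L).
  { assert (E : (1-c^2)*Qt L = sq^2*(1-L^2)*(A*c^2 - p^2*(1-c^2))).
    { unfold Qt. replace ((1 - c ^ 2) * (A * (L - ul) ^ 2 - p ^ 2 * sq ^ 2 * (1 - L ^ 2)))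
        with (A*((1 - c ^ 2) * (L - ul) ^ 2) - (1-c^2)*p ^ 2 * sq ^ 2 * (1 - L ^ 2)) by ring.
      rewrite HP. ring. }
    assert (0 < sq^2*(1-L^2)*(A*c^2 - p^2*(1-c^2))).
    { assert (0 < sq^2) by nra.
      apply Rmult_lt_0_compat; [apply Rmult_lt_0_compat|]; lra. }
    nra. }
  assert (HQs : 0 < Qt s).
  { set (al := A + p^2*sq^2).
    assert (Hal : 0 < al) by (unfold al; nra).
    assert (Q1 : Qt L - Qt ul = (L-ul)*(al*(L+ul) - 2*A*ul)) by (unfold Qt, al; ring).
    assert (Q0 : Qt ul < 0) by (unfold Qt; replace ((ul-ul)^2) with 0 by ring;
       assert (0 < p^2*sq^2*(1-ul^2)) by (assert (0 < p^2) by nra; assert (0 < sq^2) by nra;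
         apply Rmult_lt_0_compat; [apply Rmult_lt_0_compat|]; lra); lra).
    assert (Q2 : 0 < al*(L+ul) - 2*A*ul).
    { assert (0 < (L-ul)*(al*(L+ul) - 2*A*ul)) by lra. nra. }
    assert (Q3 : Qt s - Qt L = (s-L)*(al*(s+L) - 2*A*ul)) by (unfold Qt, al; ring).
    assert (0 <= (s-L)*(al*(s+L) - 2*A*ul)).
    { apply Rmult_le_pos. lra. assert (al*(s+L) >= al*(L+ul)) by nra. lra. }
    lra. }
  assert (HQs' : 0 < A*(s-ul)^2 - p^2*sq^2*(1-s^2)) by exact HQs.
  assert (Hgp : 0 < g) by (rewrite Hg; apply Rinv_0_lt_compat; lra).
  assert (HH : H = r*h/sq^2) by (unfold H; rewrite Hg; field; lra).
  assert (Hhp : 0 < h) by (rewrite Hh; nra).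
  clearbody H g.
  set (Dp := s*(r*g) - r*g*ul). set (Ep := s*(H-p) - (H-p+p)*ul).
  set (M1 := s*(H*ul) - (H*ul*ul+p)). set (M2 := s*(H*ut) - H*ut*ul).
  assert (HT : Ep^2 - Dp^2 - (M1^2+M2^2) = (A*(s-ul)^2 - p^2*sq^2*(1-s^2)) / sq^2).
  { assert (E2 : M2^2 = H^2*(s-ul)^2*ut^2) by (unfold M2; ring).
    rewrite E2, Hut2. unfold Ep, Dp, M1. rewrite HH, Hg. unfold A. field. lra. }
  assert (HTp : Ep^2 - Dp^2 - (M1^2+M2^2) > 0).
  { rewrite HT. apply Rdiv_lt_0_compat; nra. }
  assert (HDp : 0 < Dp).
  { unfold Dp. replace (s * (r * g) - r * g * ul) with (r*g*(s-ul)) by ring.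
    apply Rmult_lt_0_compat; nra. }
  split; [exact HDp|split; [|exact HTp]].
  assert (HHp : 0 < H) by (rewrite HH; apply Rdiv_lt_0_compat; nra).
  destruct (Rle_or_lt s 1) as [Hs1|Hs1].
  - assert (EM : Ep - M1 = H*(s-ul)*(1-ul) + p*(1-s)) by (unfold Ep, M1; ring).
    assert (0 < H*(s-ul)*(1-ul)).
    { assert (ul < 1) by nra. apply Rmult_lt_0_compat; [apply Rmult_lt_0_compat|]; lra. }
    assert (X1 : 0 < Ep - M1) by nra.
    assert (X2 : Ep^2 - M1^2 > 0) by nra.
    assert (X3 : 0 < Ep + M1).
    { replace (Ep^2 - M1^2) with ((Ep - M1)*(Ep+M1)) in X2 by ring.
      destruct (Rle_or_lt (Ep+M1) 0); [|lra].
      assert ((Ep - M1)*(Ep+M1) <= 0) by (rewrite <- (Rmult_0_r (Ep-M1)); apply Rmult_le_compat_l; lra). lra. }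
    lra.
  - assert (Hsqu : sq^2 <= 1 - ul^2) by nra.
    assert (Hrh : r*h - 2*p > 0) by (rewrite Hh, Hpe; nra).
    assert (HHs : H*sq^2 = r*h) by (rewrite HH; field; lra).
    assert (Y1 : H - p > 0).
    { assert ((H - p)*sq^2 > 0) by nra. nra. }
    assert (Y2 : H*(1-ul) - p > 0).
    { assert ((H*(1-ul) - p)*sq^2 > 0).
      { assert (ul < 1) by nra. assert (-1 < ul) by nra.
        assert (p*sq^2 <= p*(1-ul^2)) by (apply Rmult_le_compat_l; lra).
        assert (0 < (1-ul)*(r*h - p*(1+ul))) by (apply Rmult_lt_0_compat; nra).
        replace ((H*(1-ul) - p)*sq^2) with ((H*sq^2)*(1-ul) - p*sq^2) by ring.
        rewrite HHs. nra. }
      nra. }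
    unfold Ep. replace (s * (H - p) - (H - p + p) * ul) with ((s-1)*(H-p) + (H*(1-ul) - p)) by ring.
    nra.
Qed.

Lemma core_abs1 (G r p ul ut s : R) :
  1 < G <= 2 -> 0 < r -> 0 < p -> ul^2+ut^2 < 1 ->
  let b := ul^2+ut^2 in let g := / sqrt (1-b) in
  let h := 1 + p/((G-1)*r) + p/r in
  let c := sqrt (G*p/(r*h)) in
  s <= (ul*(1-c^2) + -1*c*/g*sqrt(1-ul^2-c^2*(b-ul^2)))/(1-c^2*b) ->
  let H := r*h*g^2 in
  0 < r*g*ul - s*(r*g) /\ 0 < (H-p+p)*ul - s*(H-p) /\
  ((H-p+p)*ul - s*(H-p))^2 - (r*g*ul - s*(r*g))^2
   - (((H*ul*ul+p) - s*(H*ul))^2 + (H*ut*ul - s*(H*ut))^2) > 0.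
Proof.
  intros HG Hr Hp Hb b g h c HL H.
  assert (Hb' : (-ul)^2 + ut^2 < 1) by nra.
  pose proof (core_abs G r p (-ul) ut (-s) HG Hr Hp Hb') as K.
  cbv zeta in K. replace ((-ul)^2) with (ul^2) in K by ring.
  fold b g h c H in K.
  assert (HL' : (- ul * (1 - c ^ 2) + 1 * c * / g * sqrt (1 - ul ^ 2 - c ^ 2 * (b - ul ^ 2))) /
       (1 - c ^ 2 * b) <= - s).
  { replace ((- ul * (1 - c ^ 2) + 1 * c * / g * sqrt (1 - ul ^ 2 - c ^ 2 * (b - ul ^ 2))) /
       (1 - c ^ 2 * b)) with (- ((ul * (1 - c ^ 2) + -1 * c * / g * sqrt (1 - ul ^ 2 - c ^ 2 * (b - ul ^ 2))) /
       (1 - c ^ 2 * b))) by (unfold Rdiv; ring). lra. }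
  specialize (K HL'). destruct K as [K1 [K2 K3]].
  split; [nra|split;[nra|]].
  replace ((H - p + p) * ul - s * (H - p)) with (- s * (H - p) - (H - p + p) * - ul) by ring.
  replace (r * g * ul - s * (r * g)) with (- s * (r * g) - r * g * - ul) by ring.
  replace ((H * ul * ul + p - s * (H * ul))^2) with ((- s * (H * - ul) - (H * - ul * - ul + p))^2) by ring.
  replace (H * ut * ul - s * (H * ut)) with (- s * (H * ut) - H * ut * - ul) by ring.
  exact K3.
Qed.

Lemma core4 Gam l W s : 1 < Gam <= 2 -> prim_adm W -> (l = 1%nat \/ l = 2%nat) ->
  lam4 Gam l W <= s ->
  0 < s*cons Gam W 0 - flux Gam l W 0 /\ 0 < s*cons Gam W 3 - flux Gam l W 3 /\
  (s*cons Gam W 3 - flux Gam l W 3)^2 - (s*cons Gam W 0 - flux Gam l W 0)^2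
  - ((s*cons Gam W 1 - flux Gam l W 1)^2 + (s*cons Gam W 2 - flux Gam l W 2)^2) > 0.
Proof.
  destruct W as [r u v p]. intros HG [Hr [Hp Hu]] Hl HL. simpl in Hr, Hp, Hu.
  destruct Hl as [-> | ->].
  - pose proof (core_abs Gam r p u v s HG Hr Hp Hu) as K.
    unfold lam4, lam_gen, csnd, lorentz, usq, uc, enth, eint in HL. cbn [rho u1 u2 pr Nat.eqb] in HL.
    cbv zeta in K. specialize (K HL).
    unfold flux, cons, uc, lorentz, usq, enth, eint. cbn [rho u1 u2 pr Nat.eqb]. rewrite !Rplus_0_r. exact K.
  - assert (Hu' : v^2 + u^2 < 1) by lra.
    pose proof (core_abs Gam r p v u s HG Hr Hp Hu') as K.
    unfold lam4, lam_gen, csnd, lorentz, usq, uc, enth, eint in HL. cbn [rho u1 u2 pr Nat.eqb] in HL.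
    cbv zeta in K. replace (v^2+u^2) with (u^2+v^2) in K by ring.
    replace (u ^ 2 + v ^ 2 - v ^ 2) with (u^2) in K by ring.
    replace (u ^ 2 + v ^ 2 - v ^ 2) with (u^2) in HL by ring.
    specialize (K HL).
    unfold flux, cons, uc, lorentz, usq, enth, eint. cbn [rho u1 u2 pr Nat.eqb]. rewrite !Rplus_0_r.
    destruct K as [K1 [K2 K3]]. split; [|split]; lra.
Qed.

Lemma core1 Gam l W s : 1 < Gam <= 2 -> prim_adm W -> (l = 1%nat \/ l = 2%nat) ->
  s <= lam1 Gam l W ->
  0 < flux Gam l W 0 - s*cons Gam W 0 /\ 0 < flux Gam l W 3 - s*cons Gam W 3 /\
  (flux Gam l W 3 - s*cons Gam W 3)^2 - (flux Gam l W 0 - s*cons Gam W 0)^2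
  - ((flux Gam l W 1 - s*cons Gam W 1)^2 + (flux Gam l W 2 - s*cons Gam W 2)^2) > 0.
Proof.
  destruct W as [r u v p]. intros HG [Hr [Hp Hu]] Hl HL. simpl in Hr, Hp, Hu.
  destruct Hl as [-> | ->].
  - pose proof (core_abs1 Gam r p u v s HG Hr Hp Hu) as K.
    unfold lam1, lam_gen, csnd, lorentz, usq, uc, enth, eint in HL. cbn [rho u1 u2 pr Nat.eqb] in HL.
    cbv zeta in K. specialize (K HL).
    unfold flux, cons, uc, lorentz, usq, enth, eint. cbn [rho u1 u2 pr Nat.eqb]. rewrite !Rplus_0_r. exact K.
  - assert (Hu' : v^2 + u^2 < 1) by lra.
    pose proof (core_abs1 Gam r p v u s HG Hr Hp Hu') as K.
    unfold lam1, lam_gen, csnd, lorentz, usq, uc, enth, eint in HL. cbn [rho u1 u2 pr Nat.eqb] in HL.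
    cbv zeta in K. replace (v^2+u^2) with (u^2+v^2) in K by ring.
    replace (u ^ 2 + v ^ 2 - v ^ 2) with (u^2) in K by ring.
    replace (u ^ 2 + v ^ 2 - v ^ 2) with (u^2) in HL by ring.
    specialize (K HL).
    unfold flux, cons, uc, lorentz, usq, enth, eint. cbn [rho u1 u2 pr Nat.eqb]. rewrite !Rplus_0_r.
    destruct K as [K1 [K2 K3]]. split; [|split]; lra.
Qed.

Definition inGv (v : nat -> R) : Prop := inG (v 0%nat) (v 1%nat) (v 2%nat) (v 3%nat).

Lemma inGv_add v w : inGv v -> inGv w -> inGv (fun k => v k + w k).
Proof. unfold inGv; intros; apply inG_add; auto. Qed.

Lemma inGv_scale a v : 0 < a -> inGv v -> inGv (fun k => a * v k).
Proof. unfold inGv; intros; apply inG_scale; auto. Qed.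

Definition VA Gam l W s (k : nat) := s*cons Gam W k - flux Gam l W k.
Definition VB Gam l W s (k : nat) := flux Gam l W k - s*cons Gam W k.

Lemma VA_ok Gam l W s : 1 < Gam <= 2 -> prim_adm W -> (l = 1%nat \/ l = 2%nat) ->
  lam4 Gam l W <= s -> inGv (VA Gam l W s).
Proof. intros. unfold inGv, inG, VA. apply core4; auto. Qed.

Lemma VB_ok Gam l W s : 1 < Gam <= 2 -> prim_adm W -> (l = 1%nat \/ l = 2%nat) ->
  s <= lam1 Gam l W -> inGv (VB Gam l W s).
Proof. intros. unfold inGv, inG, VB. apply core1; auto. Qed.

Lemma max4_1 a b c d : a <= max4 a b c d.
Proof. unfold max4. eapply Rle_trans; [apply Rmax_l|apply Rmax_l]. Qed.
Lemma max4_2 a b c d : b <= max4 a b c d.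
Proof. unfold max4. eapply Rle_trans; [apply Rmax_r|apply Rmax_l]. Qed.
Lemma max4_3 a b c d : c <= max4 a b c d.
Proof. unfold max4. eapply Rle_trans; [apply Rmax_l|apply Rmax_r]. Qed.
Lemma max4_4 a b c d : d <= max4 a b c d.
Proof. unfold max4. eapply Rle_trans; [apply Rmax_r|apply Rmax_r]. Qed.
Lemma min4_1 a b c d : min4 a b c d <= a.
Proof. unfold min4. eapply Rle_trans; [apply Rmin_l|apply Rmin_l]. Qed.
Lemma min4_2 a b c d : min4 a b c d <= b.
Proof. unfold min4. eapply Rle_trans; [apply Rmin_l|apply Rmin_r]. Qed.
Lemma min4_3 a b c d : min4 a b c d <= c.
Proof. unfold min4. eapply Rle_trans; [apply Rmin_r|apply Rmin_l]. Qed.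
Lemma min4_4 a b c d : min4 a b c d <= d.
Proof. unfold min4. eapply Rle_trans; [apply Rmin_r|apply Rmin_r]. Qed.

Theorem theorem1 (Gam : R) (WRU WLU WLD WRD : prim) :
  1 < Gam <= 2 ->
  prim_adm WRU -> prim_adm WLU -> prim_adm WLD -> prim_adm WRD ->
  S_L Gam WRU WLU WLD WRD < 0 < S_R Gam WRU WLU WLD WRD ->
  S_D Gam WRU WLU WLD WRD < 0 < S_U Gam WRU WLU WLD WRD ->
  let Ds := Ustar Gam WRU WLU WLD WRD 0 in
  let m1 := Ustar Gam WRU WLU WLD WRD 1 in
  let m2 := Ustar Gam WRU WLU WLD WRD 2 in
  let Es := Ustar Gam WRU WLU WLD WRD 3 in
  0 < Ds /\ 0 < Es /\ Es ^ 2 - Ds ^ 2 - (m1 ^ 2 + m2 ^ 2) > 0.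
Proof.
  intros HG HRU HLU HLD HRD [HL0 HR0] [HD0 HU0] Ds m1 m2 Es.
  set (sL := S_L Gam WRU WLU WLD WRD) in *.
  set (sR := S_R Gam WRU WLU WLD WRD) in *.
  set (sD := S_D Gam WRU WLU WLD WRD) in *.
  set (sU := S_U Gam WRU WLU WLD WRD) in *.
  assert (L1 : 1%nat = 1%nat \/ 1%nat = 2%nat) by auto.
  assert (L2 : 2%nat = 1%nat \/ 2%nat = 2%nat) by auto.
  assert (ER : sR/2 = max4 (lam4 Gam 1 WLD) (lam4 Gam 1 WRD) (lam4 Gam 1 WLU) (lam4 Gam 1 WRU))
    by (unfold sR, S_R; field).
  assert (EU : sU/2 = max4 (lam4 Gam 2 WLD) (lam4 Gam 2 WRD) (lam4 Gam 2 WLU) (lam4 Gam 2 WRU))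
    by (unfold sU, S_U; field).
  assert (EL : sL/2 = min4 (lam1 Gam 1 WLD) (lam1 Gam 1 WRD) (lam1 Gam 1 WLU) (lam1 Gam 1 WRU))
    by (unfold sL, S_L; field).
  assert (ED : sD/2 = min4 (lam1 Gam 2 WLD) (lam1 Gam 2 WRD) (lam1 Gam 2 WLU) (lam1 Gam 2 WRU))
    by (unfold sD, S_D; field).
  assert (V1 : inGv (fun k => sU * VA Gam 1 WRU (sR/2) k)).
  { apply inGv_scale; auto. apply VA_ok; auto. rewrite ER; apply max4_4. }
  assert (V2 : inGv (fun k => sR * VA Gam 2 WRU (sU/2) k)).
  { apply inGv_scale; auto. apply VA_ok; auto. rewrite EU; apply max4_4. }
  assert (V3 : inGv (fun k => sU * VB Gam 1 WLU (sL/2) k)).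
  { apply inGv_scale; auto. apply VB_ok; auto. rewrite EL; apply min4_3. }
  assert (V4 : inGv (fun k => (-sL) * VA Gam 2 WLU (sU/2) k)).
  { apply inGv_scale; [lra|]. apply VA_ok; auto. rewrite EU; apply max4_3. }
  assert (V5 : inGv (fun k => (-sD) * VA Gam 1 WRD (sR/2) k)).
  { apply inGv_scale; [lra|]. apply VA_ok; auto. rewrite ER; apply max4_2. }
  assert (V6 : inGv (fun k => sR * VB Gam 2 WRD (sD/2) k)).
  { apply inGv_scale; auto. apply VB_ok; auto. rewrite ED; apply min4_2. }
  assert (V7 : inGv (fun k => (-sD) * VB Gam 1 WLD (sL/2) k)).
  { apply inGv_scale; [lra|]. apply VB_ok; auto. rewrite EL; apply min4_1. }
  assert (V8 : inGv (fun k => (-sL) * VB Gam 2 WLD (sD/2) k)).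
  { apply inGv_scale; [lra|]. apply VB_ok; auto. rewrite ED; apply min4_1. }
  pose proof (inGv_add _ _ (inGv_add _ _ (inGv_add _ _ V1 V2) (inGv_add _ _ V3 V4))
                     (inGv_add _ _ (inGv_add _ _ V5 V6) (inGv_add _ _ V7 V8))) as VS.
  assert (Hden : 0 < (sR - sL) * (sU - sD)) by (apply Rmult_lt_0_compat; lra).
  pose proof (inGv_scale (/ ((sR - sL) * (sU - sD))) _ (Rinv_0_lt_compat _ Hden) VS) as VF.
  assert (EQ : forall k, Ustar Gam WRU WLU WLD WRD k =
     / ((sR - sL) * (sU - sD)) *
      (sU * VA Gam 1 WRU (sR / 2) k + sR * VA Gam 2 WRU (sU / 2) k +
       (sU * VB Gam 1 WLU (sL / 2) k + - sL * VA Gam 2 WLU (sU / 2) k) +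
       (- sD * VA Gam 1 WRD (sR / 2) k + sR * VB Gam 2 WRD (sD / 2) k +
        (- sD * VB Gam 1 WLD (sL / 2) k + - sL * VB Gam 2 WLD (sD / 2) k)))).
  { intro k. unfold Ustar, VA, VB. fold sL sR sD sU. cbv zeta. field. lra. }
  unfold inGv, inG in VF. cbv beta in VF.
  unfold Ds, m1, m2, Es. rewrite !EQ. exact VF.
Qed.
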